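(* Let $\mathcal{S}=\{A_1,\dots,A_p\}\subseteq M_m$ ($p\ge1$), let $\langle\mathcal{S}\rangle_0$ be the unital subalgebra of $M_m$ generated by the $A_i$ and $\langle\mathcal{S}\rangle_1$ the (not necessarily unital) subalgebra generated by the $A_i$. Let $\tau(X)=\sum_{i=1}^pA_i^*XA_i$ on $M_m$. Let $(a_n)_{n\ge0}$ be strictly positive scalars such that $\sum_{n\ge0}a_n\tau^n$ converges in norm, and put $\sigma_0=\sum_{n=0}^\infty a_n\tau^n$, $\sigma_1=\sum_{n=1}^\infty a_n\tau^n$ (with $\tau^0$ the identity map). Then for $j=0,1$ the coefficient space of $\sigma_j$ equals $\langle\mathcal{S}\rangle_j$. Consequently, $\dim\langle\mathcal{S}\rangle_j$ equals the Choi rank of $\sigma_j$, and $A\in\langle\mathcal{S}\rangle_j$ if and only if there exists a scalar $q>0$ such that $\sigma_j-q\alpha_A$ is completely positive.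
   Context: Every completely positive (CP) map $\sigma$ on $M_m$ has a Choi-Kraus decomposition $\sigma(X)=\sum_{k=1}^rC_k^*XC_k$; the span of the $C_k$ does not depend on the decomposition and is called the (Choi-Kraus) coefficient space $\mathcal{M}_\sigma$ of $\sigma$; its dimension is the Choi rank of $\sigma$. For $A\in M_m$, $\alpha_A(X)=A^*XA$. *)

(* Defs.v *)
From HB Require Import structures.
From mathcomp Require Import all_boot all_order all_algebra all_field.
From mathcomp Require Import complex.
From mathcomp Require Import reals.
Set Implicit Arguments.
Unset Strict Implicit.
Unset Printing Implicit Defensive.
Import Order.TTheory GRing.Theory Num.Theory.
Local Open Scope ring_scope.

Section Defs.
Variable R : realType.
Local Notation C := (R[i]).

Definition adj {p q : nat} (A : 'M[C]_(p, q)) : 'M[C]_(q, p) :=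
  (map_mx (fun z : C => Num.conj z) A)^T.

Definition alpha {m : nat} (A : 'M[C]_m) (X : 'M[C]_m) : 'M[C]_m :=
  adj A *m X *m A.

(* The k x k block matrix [X a b] (blocks in M_m) is positive semidefinite:
   w^* [X] w >= 0 for every vector w = (v_0, ..., v_{k-1}) in C^{km}. *)
Definition psd_block {m k : nat} (X : 'I_k -> 'I_k -> 'M[C]_m) : Prop :=
  forall v : 'I_k -> 'cV[C]_m,
    0 <= \sum_(a < k) \sum_(b < k) (adj (v a) *m X a b *m v b) 0 0.

Definition completely_positive {m : nat} (sigma : 'M[C]_m -> 'M[C]_m) : Prop :=
  forall (k : nat) (X : 'I_k -> 'I_k -> 'M[C]_m),
    psd_block X -> psd_block (fun a b => sigma (X a b)).

Definition is_kraus {m r : nat} (sigma : 'M[C]_m -> 'M[C]_m)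
  (Cs : 'I_r -> 'M[C]_m) : Prop :=
  forall X, sigma X = \sum_(k < r) adj (Cs k) *m X *m Cs k.

Definition fspan {m r : nat} (Cs : 'I_r -> 'M[C]_m) : {vspace 'M[C]_m} :=
  (<< [seq Cs k | k <- enum 'I_r] >>)%VS.

Definition mx_cvg_to {p q : nat} (u : nat -> 'M[C]_(p, q)) (L : 'M[C]_(p, q))
  : Prop :=
  forall eps : C, 0 < eps -> exists N : nat, forall n : nat, (N <= n)%N ->
    forall i j, `|u n i j - L i j| < eps.

Definition gen_alg0 {m : nat} (U : {vspace 'M[C]_m.+1}) : {vspace 'M[C]_m.+1} :=
  agenv U.

(* Non-unital subalgebra generated by U: U + U^2 + ... (same truncation as
   the library's agenv, which suffices by dimension). *)
Definition gen_alg1 {m : nat} (U : {vspace 'M[C]_m.+1}) : {vspace 'M[C]_m.+1} :=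
  (\sum_(i < \dim {: 'M[C]_m.+1}) U ^+ i.+1)%VS.

(* The conclusions of the theorem for a CP map sigma and a space V:
   (1) the Choi-Kraus coefficient space of sigma is V (sigma has a Choi-Kraus
       decomposition, and every such decomposition spans V);
   (2) the Choi rank of sigma equals dim V;
   (3) A \in V iff sigma - q alpha_A is CP for some scalar q > 0. *)
Definition theorem_conclusion {m : nat} (sigma : 'M[C]_m.+1 -> 'M[C]_m.+1)
  (V : {vspace 'M[C]_m.+1}) : Prop :=
  [/\ (exists (r : nat) (Cs : 'I_r -> 'M[C]_m.+1), is_kraus sigma Cs)
    , (forall (r : nat) (Cs : 'I_r -> 'M[C]_m.+1),
          is_kraus sigma Cs -> fspan Cs = V)
    , (forall (r : nat) (Cs : 'I_r -> 'M[C]_m.+1),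
          is_kraus sigma Cs -> \dim (fspan Cs) = \dim V)
    & (forall A : 'M[C]_m.+1, A \in V <->
          exists q : C, 0 < q /\
            completely_positive (fun X => sigma X - q *: alpha A X))].

End Defs.

(* Main.v *)
Require Import Defs.
From HB Require Import structures.
From mathcomp Require Import all_boot all_order all_algebra all_field.
From mathcomp Require Import complex.
From mathcomp Require Import reals.
From mathcomp Require Import ring lra.
Import Order.TTheory GRing.Theory Num.Theory.
Local Open Scope ring_scope.

Set Implicit Arguments.
Unset Strict Implicit.
Unset Printing Implicit Defensive.

Section P1.
Variable R : realType.
Local Notation C := (R[i]).

Lemma hadjE p q (A : 'M[C]_(p, q)) i j : adj A i j = (A j i)^*.
Proof. by rewrite /adj !mxE. Qed.

Lemma hadjD p q (A B : 'M[C]_(p, q)) : adj (A + B) = adj A + adj B.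
Proof. by apply/matrixP => i j; rewrite !hadjE !mxE rmorphD. Qed.

Lemma hadjN p q (A : 'M[C]_(p, q)) : adj (- A) = - adj A.
Proof. by apply/matrixP => i j; rewrite !hadjE !mxE rmorphN. Qed.

Lemma hadjZ p q c (A : 'M[C]_(p, q)) : adj (c *: A) = c^* *: adj A.
Proof. by apply/matrixP => i j; rewrite !hadjE !mxE rmorphM. Qed.

Lemma hadjM p q r (A : 'M[C]_(p, q)) (B : 'M[C]_(q, r)) :
  adj (A *m B) = adj B *m adj A.
Proof.
apply/matrixP => i j; rewrite hadjE !mxE rmorph_sum.
by apply: eq_bigr => k _; rewrite !hadjE rmorphM mulrC.
Qed.

Lemma hadj_sum p q I (s : seq I) (P : pred I) (F : I -> 'M[C]_(p, q)) :
  adj (\sum_(i <- s | P i) F i) = \sum_(i <- s | P i) adj (F i).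
Proof.
elim/big_rec2: _ => [|i x y _ <-]; first last; first by rewrite hadjD.
by apply/matrixP => i j; rewrite hadjE !mxE conjC0.
Qed.

Lemma hadjK p q (A : 'M[C]_(p, q)) : adj (adj A) = A.
Proof. by apply/matrixP => i j; rewrite !hadjE conjCK. Qed.

Variable m : nat.
Local Notation M := 'M[C]_m.+1.

Definition krausS (s : seq M) (X : M) : M := \sum_(Cm <- s) adj Cm *m X *m Cm.

Definition fw (w x : M) : C := \sum_a \sum_b w a b * x a b.

Definition Qf (F : M -> M) (w : M) : C :=
  \sum_a \sum_b \sum_c \sum_d ((w a b)^* * w c d * F (delta_mx a c) b d).

Lemma fwD w x y : fw w (x + y) = fw w x + fw w y.
Proof.
rewrite /fw -big_split; apply: eq_bigr => a _; rewrite -big_split.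
by apply: eq_bigr => b _; rewrite mxE mulrDr.
Qed.

Lemma fwZ w c x : fw w (c *: x) = c * fw w x.
Proof.
rewrite /fw mulr_sumr; apply: eq_bigr => a _; rewrite mulr_sumr.
by apply: eq_bigr => b _; rewrite mxE mulrCA.
Qed.

Lemma fw0 w : fw w 0 = 0.
Proof. by rewrite -(scale0r 0) fwZ mul0r. Qed.

Lemma fwN w x : fw w (- x) = - fw w x.
Proof. by rewrite -scaleN1r fwZ mulN1r. Qed.

Lemma fw_sum w I (s : seq I) (P : pred I) (F : I -> M) :
  fw w (\sum_(i <- s | P i) F i) = \sum_(i <- s | P i) fw w (F i).
Proof. by elim/big_rec2: _ => [|i x y _ <-]; rewrite ?fw0 ?fwD. Qed.

Lemma kraus_entry (Cm : M) a c b d :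
  (adj Cm *m delta_mx a c *m Cm) b d = (Cm a b)^* * Cm c d.
Proof.
rewrite -(mul_delta_mx (0 : 'I_1)) mulmxA -[_ *m _ *m Cm]mulmxA -colE -rowE.
by rewrite mxE big_ord1 !mxE.
Qed.

Lemma Qf_ext F G w : (forall X, F X = G X) -> Qf F w = Qf G w.
Proof. by move=> FG; rewrite /Qf; do 4! (apply: eq_bigr => ? _); rewrite FG. Qed.

Lemma QfD F G w : Qf (fun X => F X + G X) w = Qf F w + Qf G w.
Proof.
rewrite /Qf -big_split; apply: eq_bigr => a _; rewrite -big_split.
apply: eq_bigr => b _; rewrite -big_split; apply: eq_bigr => c _.
by rewrite -big_split; apply: eq_bigr => d _; rewrite mxE mulrDr.
Qed.

Lemma QfZ F c w : Qf (fun X => c *: F X) w = c * Qf F w.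
Proof.
rewrite /Qf mulr_sumr; apply: eq_bigr => a _; rewrite mulr_sumr.
apply: eq_bigr => b _; rewrite mulr_sumr; apply: eq_bigr => c' _.
by rewrite mulr_sumr; apply: eq_bigr => d _; rewrite mxE mulrCA.
Qed.

Lemma Qf0 w : Qf (fun X => 0) w = 0.
Proof.
rewrite /Qf big1 // => a _; rewrite big1 // => b _; rewrite big1 // => c _.
by rewrite big1 // => d _; rewrite mxE mulr0.
Qed.

Lemma QfN F w : Qf (fun X => - F X) w = - Qf F w.
Proof.
rewrite -mulN1r -QfZ; apply: Qf_ext => X; by rewrite scaleN1r.
Qed.

Lemma QfB F G w : Qf (fun X => F X - G X) w = Qf F w - Qf G w.
Proof. by rewrite QfD QfN. Qed.

Lemma Qf_sum I (s : seq I) (P : pred I) (F : I -> M -> M) w :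
  Qf (fun X => \sum_(i <- s | P i) F i X) w = \sum_(i <- s | P i) Qf (F i) w.
Proof.
elim: s => [|x s IH].
  by rewrite big_nil -(Qf0 w); apply: Qf_ext => X; rewrite big_nil.
rewrite big_cons; case Px: (P x).
  by rewrite -IH -QfD; apply: Qf_ext => X; rewrite big_cons Px.
by rewrite -IH; apply: Qf_ext => X; rewrite big_cons Px.
Qed.

Lemma Qf_alpha (Cm : M) w :
  Qf (fun X => adj Cm *m X *m Cm) w = (fw w Cm)^* * fw w Cm.
Proof.
rewrite /Qf /fw rmorph_sum mulr_suml; apply: eq_bigr => a _.
rewrite rmorph_sum mulr_suml; apply: eq_bigr => b _.
rewrite mulr_sumr; apply: eq_bigr => c _; rewrite mulr_sumr.
apply: eq_bigr => d _; rewrite kraus_entry rmorphM; ring.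
Qed.

Lemma Qf_kraus s w :
  Qf (krausS s) w = \sum_(Cm <- s) (fw w Cm)^* * fw w Cm.
Proof.
rewrite (Qf_ext _ (G := fun X => \sum_(Cm <- s) adj Cm *m X *m Cm)) //.
by rewrite Qf_sum; apply: eq_bigr => Cm _; rewrite Qf_alpha.
Qed.

End P1.

Section Scvg.
Variable F : numFieldType.

Definition scvg (u : nat -> F) (l : F) := forall eps, 0 < eps ->
  exists N, forall n, (N <= n)%N -> `|u n - l| < eps.

Lemma half_gt0 (e : F) : 0 < e -> 0 < e / 2.
Proof. by move=> e0; rewrite divr_gt0 // ltr0n. Qed.

Lemma halfD (e : F) : e / 2 + e / 2 = e.
Proof. by rewrite -splitr. Qed.

Lemma scvg_const c : scvg (fun _ => c) c.
Proof. by move=> e e0; exists 0%N => n _; rewrite subrr normr0. Qed.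

Lemma scvg_ext u v l : (forall n, u n = v n) -> scvg u l -> scvg v l.
Proof. by move=> uv cu e /cu [N HN]; exists N => n /HN; rewrite uv. Qed.

Lemma scvg_add u v l k : scvg u l -> scvg v k ->
  scvg (fun n => u n + v n) (l + k).
Proof.
move=> cu cv e e0; have e2 := half_gt0 e0.
have [N1 H1] := cu _ e2; have [N2 H2] := cv _ e2.
exists (maxn N1 N2) => n; rewrite geq_max => /andP [n1 n2].
rewrite opprD addrACA; apply: (le_lt_trans (ler_normD _ _)).
by rewrite -(halfD e) ltrD ?H1 ?H2.
Qed.

Lemma scvg_scale c u l : scvg u l -> scvg (fun n => c * u n) (c * l).
Proof.
move=> cu e e0; have c1 : 0 < `|c| + 1 by rewrite ltr_wpDl.
have [N HN] := cu (e / (`|c| + 1)) (divr_gt0 e0 c1).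
exists N => n /HN h; rewrite -mulrBr normrM.
apply: (le_lt_trans (y := (`|c| + 1) * `|u n - l|)).
  by rewrite ler_wpM2r // lerDl.
by rewrite mulrC -ltr_pdivlMr.
Qed.

Lemma scvg_sum I (s : seq I) (P : pred I) (u : I -> nat -> F) (l : I -> F) :
  (forall i, P i -> scvg (u i) (l i)) ->
  scvg (fun n => \sum_(i <- s | P i) u i n) (\sum_(i <- s | P i) l i).
Proof.
move=> H; elim: s => [|x s IH].
  by apply: (scvg_ext (u := fun _ => 0)) => [n|]; rewrite ?big_nil //; exact: scvg_const.
rewrite big_cons; case Px: (P x) => /=.
  by apply: (scvg_ext (u := fun n => u x n + \sum_(i <- s | P i) u i n));
    [move=> n; rewrite big_cons Px | apply: scvg_add => //; apply: H].
by apply: (scvg_ext _ IH) => n; rewrite big_cons Px.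
Qed.

Lemma scvg_uniq u l k : scvg u l -> scvg u k -> l = k.
Proof.
move=> cl ck; apply/eqP; rewrite -subr_eq0; apply/negP => /negP ne.
have d0 : 0 < `|l - k| by rewrite normr_gt0.
have [N1 H1] := cl _ (half_gt0 d0); have [N2 H2] := ck _ (half_gt0 d0).
set n := maxn N1 N2.
have h1 := H1 n (leq_maxl _ _); have h2 := H2 n (leq_maxr _ _).
have h3 := ler_distD (u n) l k; rewrite (distrC l (u n)) in h3.
have : `|l - k| < `|l - k|.
  by apply: (le_lt_trans h3); rewrite [X in _ < X]splitr ltrD.
by rewrite ltxx.
Qed.

Lemma scvg_ge0 u l : (forall n, 0 <= u n) -> scvg u l -> 0 <= l.
Proof.
move=> u0 cl; suff -> : l = `|l| by [].
apply/eqP; rewrite -subr_eq0; apply/negP => /negP ne.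
have d0 : 0 < `|l - (`|l|)| by rewrite normr_gt0.
have [N H] := cl _ (half_gt0 d0); have h := H N (leqnn N).
have h2 := ler_dist_dist (u N) l.
rewrite (ger0_norm (u0 N)) in h2.
have h3 := ler_distD (u N) l `|l|; rewrite (distrC l (u N)) in h3.
have : `|l - (`|l|)| < `|l - (`|l|)|.
  apply: (le_lt_trans h3); rewrite [X in _ < X]splitr ltrD //.
  exact: (le_lt_trans h2).
by rewrite ltxx.
Qed.

End Scvg.

Section Cvg.
Variable R : realType.
Local Notation C := (R[i]).

Lemma scvg_conj (u : nat -> C) l : scvg u l -> scvg (fun n => (u n)^*) l^*.
Proof.
by move=> cu e /cu [N HN]; exists N => n /HN; rewrite -rmorphB norm_conjC.
Qed.

Lemma mx_scvg p q (u : nat -> 'M[C]_(p, q)) L i j :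
  mx_cvg_to u L -> scvg (fun n => u n i j) (L i j).
Proof. by move=> H e /H [N HN]; exists N => n /HN; apply. Qed.

Variable m : nat.
Local Notation M := 'M[C]_m.+1.
Variables (p : nat) (A : 'I_p -> M).

Fixpoint words (n : nat) : seq M :=
  if n is n'.+1 then [seq P *m A l | P <- words n', l <- enum 'I_p]
  else [:: 1%:M].

Definition tau X := \sum_(l < p) adj (A l) *m X *m A l.

Lemma hadj1 : adj (1%:M : M) = 1%:M.
Proof. by apply/matrixP => i j; rewrite hadjE !mxE eq_sym rmorph_nat. Qed.

Lemma iter_tau n X : iter n tau X = krausS (words n) X.
Proof.
elim: n => [|n IH] /=.
  by rewrite /krausS big_cons big_nil addr0 mulmx1 hadj1 mul1mx.
rewrite IH /tau /krausS big_allpairs_dep /= exchange_big big_enum /=.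
apply: eq_bigr => l _; rewrite mulmx_sumr mulmx_suml; apply: eq_bigr => P _.
by rewrite hadjM !mulmxA.
Qed.

End Cvg.

Section Lin.
Variable R : realType.
Local Notation C := (R[i]).

Lemma conjC_sum I (s : seq I) (P : pred I) (F : I -> C) :
  (\sum_(i <- s | P i) F i)^* = \sum_(i <- s | P i) (F i)^*.
Proof. exact: rmorph_sum. Qed.

Lemma conjCM (x y : C) : (x * y)^* = x^* * y^*.
Proof. exact: rmorphM. Qed.
Variable m : nat.
Local Notation M := 'M[C]_m.+1.

Lemma lin_expand (F : M -> M) :
  (forall c X Y, F (c *: X + Y) = c *: F X + F Y) ->
  forall X, F X = \sum_a \sum_c X a c *: F (delta_mx a c).
Proof.
move=> HF X.
have F0 : F 0 = 0.
  have := HF 1 0 0; rewrite !scale1r addr0 => h.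
  by apply: (addrI (F 0)); rewrite addr0 -h.
have FD Y Z : F (Y + Z) = F Y + F Z by have := HF 1 Y Z; rewrite !scale1r.
have FZ c Y : F (c *: Y) = c *: F Y by rewrite -(addr0 (c *: Y)) HF F0 addr0.
have Fs I (s : seq I) (P : pred I) (G : I -> M) :
    F (\sum_(i <- s | P i) G i) = \sum_(i <- s | P i) F (G i).
  by elim/big_rec2: _ => [|i x y _ <-]; rewrite ?F0 ?FD.
rewrite {1}(matrix_sum_delta X) Fs; apply: eq_bigr => a _.
by rewrite Fs; apply: eq_bigr => c _; rewrite FZ.
Qed.

Lemma krausS_lin (s : seq M) c X Y :
  krausS s (c *: X + Y) = c *: krausS s X + krausS s Y.
Proof.
rewrite /krausS scaler_sumr -big_split; apply: eq_bigr => Cm _.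
by rewrite mulmxDr mulmxDl -scalemxAr -scalemxAl.
Qed.

Variables (p : nat) (A : 'I_p -> M) (b : nat -> C).
Hypothesis hb : forall n, 0 <= b n.
Variable sigma : M -> M.

Definition SN N X := \sum_(n < N) b n *: krausS (words A n) X.

Hypothesis hs : forall X, mx_cvg_to (fun N => SN N X) (sigma X).

Lemma SN_lin N c X Y : SN N (c *: X + Y) = c *: SN N X + SN N Y.
Proof.
rewrite /SN scaler_sumr -big_split; apply: eq_bigr => n _.
by rewrite krausS_lin scalerDr !scalerA mulrC.
Qed.

Lemma Qf_SN N w : Qf (SN N) w =
  \sum_(n < N) b n * \sum_(P <- words A n) (fw w P)^* * fw w P.
Proof.
rewrite /SN Qf_sum; apply: eq_bigr => n _.
by rewrite QfZ Qf_kraus.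
Qed.

Lemma cvg_Qf w : scvg (fun N => Qf (SN N) w) (Qf sigma w).
Proof.
rewrite /Qf; apply: scvg_sum => a _; apply: scvg_sum => b' _.
apply: scvg_sum => c _; apply: scvg_sum => d _.
by apply: scvg_scale; apply: mx_scvg.
Qed.

Lemma SN_Qf_ge0 N w : 0 <= Qf (SN N) w.
Proof.
rewrite Qf_SN; apply: sumr_ge0 => n _; apply: mulr_ge0 => //.
by apply: sumr_ge0 => P _; rewrite mulrC mul_conjC_ge0.
Qed.

Lemma Qsig_ge0 w : 0 <= Qf sigma w.
Proof. exact: (scvg_ge0 (SN_Qf_ge0^~ w) (cvg_Qf w)). Qed.

Lemma Qsig_eq0 w : Qf sigma w = 0 <->
  (forall n, 0 < b n -> forall P, P \in words A n -> fw w P = 0).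
Proof.
split => [Q0 n bn P Pw | H].
  pose t := \sum_(P <- words A n) (fw w P)^* * fw w P.
  have t0 : 0 <= t by apply: sumr_ge0 => P' _; rewrite mulrC mul_conjC_ge0.
  have bt : 0 <= b n * t by rewrite mulr_ge0.
  have le N : (n < N)%N -> b n * t <= Qf (SN N) w.
    move=> nN; rewrite Qf_SN (bigD1 (Ordinal nN)) //= lerDl.
    apply: sumr_ge0 => i _; apply: mulr_ge0 => //.
    by apply: sumr_ge0 => P' _; rewrite mulrC mul_conjC_ge0.
  have bt0 : b n * t = 0.
    apply/eqP; apply/negP => /negP ne.
    have e0 : 0 < b n * t by rewrite lt_def ne bt.
    have [N HN] := cvg_Qf w e0; rewrite Q0 in HN.
    have := HN (maxn N n.+1) (leq_maxl _ _); rewrite subr0.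
    rewrite ger0_norm ?SN_Qf_ge0 // => h.
    by have := lt_le_trans h (le (maxn N n.+1) (leq_maxr N n.+1)); rewrite ltxx.
  have : t = 0.
    by move: bt0 => /eqP; rewrite mulf_eq0 (gt_eqF bn) /= => /eqP.
  move/eqP; rewrite psumr_eq0; last by move=> P' _; rewrite mulrC mul_conjC_ge0.
  move/allP => /(_ P Pw) /=; rewrite mulrC mul_conjC_eq0 => /eqP //.
apply: (scvg_uniq (cvg_Qf w)).
apply: (scvg_ext (u := fun _ => 0)); last exact: scvg_const.
move=> N; rewrite Qf_SN big1 // => n _.
have [bn0|bn] := eqVneq (b n) 0; first by rewrite bn0 mul0r.
have bp : 0 < b n by rewrite lt_def bn hb.
rewrite big_seq big1 ?mulr0 // => P Pw.
by rewrite (H _ bp P Pw) mulr0.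
Qed.

Lemma sigma_lin X : sigma X = \sum_a \sum_c X a c *: sigma (delta_mx a c).
Proof.
apply/matrixP => i j.
apply: (scvg_uniq (mx_scvg i j (hs X))).
apply: (scvg_ext (u := fun N => \sum_a \sum_c X a c * SN N (delta_mx a c) i j)).
  move=> N; rewrite (lin_expand (@SN_lin N) X) summxE; apply: eq_bigr => a _.
  by rewrite summxE; apply: eq_bigr => c _; rewrite mxE.
rewrite summxE; apply: scvg_sum => a _; rewrite summxE; apply: scvg_sum => c _.
rewrite mxE; apply: scvg_scale; exact: mx_scvg.
Qed.

Lemma SN_entry N a c b' d : SN N (delta_mx a c) b' d =
  \sum_(n < N) b n * \sum_(P <- words A n) (P a b')^* * P c d.
Proof.
rewrite /SN summxE; apply: eq_bigr => n _; rewrite mxE /krausS summxE.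
by congr (_ * _); apply: eq_bigr => P _; rewrite kraus_entry.
Qed.

Lemma sigma_herm a c b' d :
  (sigma (delta_mx c a) d b')^* = sigma (delta_mx a c) b' d.
Proof.
apply: (scvg_uniq (scvg_conj (mx_scvg d b' (hs (delta_mx c a))))).
apply: (scvg_ext _ (mx_scvg b' d (hs (delta_mx a c)))) => N.
rewrite !SN_entry conjC_sum; apply: eq_bigr => n _.
rewrite conjCM conj_Creal ?ger0_real // conjC_sum; congr (_ * _).
by apply: eq_bigr => P _; rewrite conjCM conjCK mulrC.
Qed.

End Lin.

Section Kraus.
Variable R : realType.
Local Notation C := (R[i]).
Variable m : nat.
Local Notation M := 'M[C]_m.+1.
Local Notation T := ('I_m.+1 * 'I_m.+1)%type.
Local Notation K := #|{: T}|.
Local Notation rk := (@enum_rank T).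
Local Notation ev := (@enum_val T (pred_of_argType T)).

Lemma sum_pairs (G : 'I_K -> C) :
  \sum_(i < K) G i = \sum_a \sum_b G (rk (a, b)).
Proof.
rewrite pair_bigA /= (reindex rk) /=; last by apply: onW_bij; apply: enum_rank_bij.
by apply: eq_bigr => -[a b].
Qed.

Variable F : M -> M.
Hypothesis Flin : forall X, F X = \sum_a \sum_c X a c *: F (delta_mx a c).
Hypothesis Fpsd : forall w, 0 <= Qf F w.
Hypothesis Fherm : forall a c b d, (F (delta_mx c a) d b)^* = F (delta_mx a c) b d.

Definition Jm : 'M[C]_K :=
  \matrix_(i, j) F (delta_mx (ev i).1 (ev j).1) (ev i).2 (ev j).2.

Lemma Jm_rk a b c d : Jm (rk (a, b)) (rk (c, d)) = F (delta_mx a c) b d.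
Proof. by rewrite mxE !enum_rankK. Qed.

Local Open Scope sesquilinear_scope.

Lemma Jm_herm : Jm \is hermsymmx.
Proof.
rewrite qualifE /= expr0 scale1r; apply/eqP/matrixP => i j.
by rewrite !mxE Fherm.
Qed.

Local Notation P := (spectralmx Jm).
Local Notation dg := (spectral_diag Jm).

Lemma Jm_dec : Jm = P^t* *m diag_mx dg *m P.
Proof.
have /orthomx_spectralP := hermitian_normalmx Jm_herm.
by rewrite invmx_unitary ?spectral_unitarymx.
Qed.

Lemma Jm_entry i j : Jm i j = \sum_k (P k i)^* * dg 0 k * P k j.
Proof.
rewrite {1}Jm_dec mul_mx_diag !mxE; apply: eq_bigr => k _; by rewrite !mxE.
Qed.

Lemma dg_ge0 k : 0 <= dg 0 k.
Proof.
have -> : dg 0 k = (P *m Jm *m P^t*) k k.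
  move: (spectralmx Jm) (spectral_diag Jm) (spectral_unitarymx Jm) Jm_dec.
  move=> Q d /unitarymxP QU ->.
  rewrite !mulmxA QU mul1mx -mulmxA QU mulmx1.
  by rewrite mxE eqxx mulr1n.
have -> : (P *m Jm *m P^t*) k k =
    \sum_i \sum_j P k i * Jm i j * (P k j)^*.
  rewrite mxE exchange_big; apply: eq_bigr => j _.
  rewrite !mxE mulr_suml; apply: eq_bigr => i _; by rewrite !mxE.
pose w : M := \matrix_(a, b) (P k (rk (a, b)))^*.
have := Fpsd w; congr (_ <= _).
rewrite /Qf sum_pairs; apply: eq_bigr => a _; apply: eq_bigr => b _.
rewrite sum_pairs; apply: eq_bigr => c _; apply: eq_bigr => d _.
rewrite Jm_rk !mxE conjCK; ring.
Qed.


Definition Cs (k : 'I_K) : M := \matrix_(a, b) (sqrtC (dg 0 k) * P k (rk (a, b))).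

Lemma kraus_J a c b d :
  F (delta_mx a c) b d = \sum_k (Cs k a b)^* * Cs k c d.
Proof.
rewrite -Jm_rk Jm_entry; apply: eq_bigr => k _; rewrite !mxE.
have s0 : 0 <= sqrtC (dg 0 k) by rewrite sqrtC_ge0 dg_ge0.
rewrite conjCM (conj_Creal (ger0_real s0)).
have := sqrtCK (dg 0 k); rewrite expr2 => e.
by rewrite -{1}e; ring.
Qed.

Lemma kraus_exists : is_kraus F Cs.
Proof.
move=> X.
pose G := fun X : M => \sum_(k < K) adj (Cs k) *m X *m Cs k.
have Glin c Y Z : G (c *: Y + Z) = c *: G Y + G Z.
  rewrite /G scaler_sumr -big_split; apply: eq_bigr => k _.
  by rewrite mulmxDr mulmxDl -scalemxAr -scalemxAl.
rewrite -/(G X) (lin_expand Glin X) Flin; apply: eq_bigr => a _.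
apply: eq_bigr => c _; congr (_ *: _); apply/matrixP => b d.
by rewrite kraus_J /G summxE; apply: eq_bigr => k _; rewrite kraus_entry.
Qed.

End Kraus.

Section CP.
Variable R : realType.
Local Notation C := (R[i]).
Variable m : nat.
Local Notation M := 'M[C]_m.+1.
Local Notation V := 'cV[C]_m.+1.

Variable k : nat.
Variable X : 'I_k -> 'I_k -> M.
Hypothesis Xpsd : psd_block X.

Definition Bq (u u' : 'I_k -> V) : C :=
  \sum_(a < k) \sum_(b < k) (adj (u a) *m X a b *m u' b) 0 0.
Definition Nq u := Bq u u.

Lemma Nq_ge0 u : 0 <= Nq u. Proof. exact: Xpsd. Qed.

Lemma BqDl u1 u2 w : Bq (fun a => u1 a + u2 a) w = Bq u1 w + Bq u2 w.
Proof.
rewrite /Bq -big_split; apply: eq_bigr => a _; rewrite -big_split.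
by apply: eq_bigr => b _; rewrite hadjD mulmxDl mulmxDl mxE.
Qed.

Lemma BqDr u1 u2 w : Bq w (fun a => u1 a + u2 a) = Bq w u1 + Bq w u2.
Proof.
rewrite /Bq -big_split; apply: eq_bigr => a _; rewrite -big_split.
by apply: eq_bigr => b _; rewrite mulmxDr mxE.
Qed.

Lemma BqZl c u w : Bq (fun a => c *: u a) w = c^* * Bq u w.
Proof.
rewrite /Bq mulr_sumr; apply: eq_bigr => a _; rewrite mulr_sumr.
by apply: eq_bigr => b _; rewrite hadjZ -!scalemxAl mxE.
Qed.

Lemma BqZr c u w : Bq w (fun a => c *: u a) = c * Bq w u.
Proof.
rewrite /Bq mulr_sumr; apply: eq_bigr => a _; rewrite mulr_sumr.
by apply: eq_bigr => b _; rewrite -!scalemxAr mxE.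
Qed.

Lemma NqZ c u : Nq (fun a => c *: u a) = c^* * c * Nq u.
Proof. by rewrite /Nq BqZl BqZr mulrA. Qed.

Lemma Nq_par u1 u2 :
  Nq (fun a => u1 a + u2 a) <= 2 * Nq u1 + 2 * Nq u2.
Proof.
have h := Nq_ge0 (fun a => u1 a + (-1) *: u2 a).
have e1 : Nq (fun a => u1 a + u2 a) = Nq u1 + Bq u1 u2 + Bq u2 u1 + Nq u2.
  by rewrite /Nq BqDl !BqDr; ring.
have e2 : Nq (fun a => u1 a + (-1) *: u2 a) =
    Nq u1 - Bq u1 u2 - Bq u2 u1 + Nq u2.
  by rewrite /Nq BqDl !BqDr !BqZl !BqZr conjCN1; ring.
rewrite e2 in h; rewrite e1 -subr_ge0.
have -> : 2 * Nq u1 + 2 * Nq u2 - (Nq u1 + Bq u1 u2 + Bq u2 u1 + Nq u2) =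
   Nq u1 - Bq u1 u2 - Bq u2 u1 + Nq u2 by ring.
exact: h.
Qed.

Lemma Nq_sum r (z : 'I_r -> 'I_k -> V) :
  Nq (fun a => \sum_(i < r) z i a) <= 2 ^+ r * \sum_(i < r) Nq (z i).
Proof.
elim: r z => [|r IH] z.
  rewrite big_ord0 mulr0.
  have -> : Nq (fun a => \sum_(i < 0) z i a) = Nq (fun a => 0 *: 0).
    by rewrite /Nq /Bq; apply: eq_bigr => a _; apply: eq_bigr => b _; rewrite !big_ord0 scale0r.
  by rewrite NqZ conjC0 !mul0r.
have -> : Nq (fun a => \sum_(i < r.+1) z i a) =
    Nq (fun a => z ord0 a + \sum_(i < r) z (lift ord0 i) a).
  by rewrite /Nq /Bq; apply: eq_bigr => a _; apply: eq_bigr => b _; rewrite !big_ord_recl.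
apply: (le_trans (Nq_par _ _)).
rewrite big_ord_recl exprS -mulrA mulrDr.
rewrite [X in _ <= X]mulrDr; apply: lerD.
  rewrite ler_pM2l ?ltr0n //.
  rewrite -[X in X <= _]mul1r ler_wpM2r ?Nq_ge0 //.
  by rewrite exprn_ege1 // ler1n.
rewrite ler_pM2l ?ltr0n //; exact: IH.
Qed.

End CP.

Section CPmain.
Variable R : realType.
Local Notation C := (R[i]).
Variable m : nat.
Local Notation M := 'M[C]_m.+1.

Lemma cp_kraus_sub r (Cs : 'I_r -> M) (lam : 'I_r -> C) :
  exists2 q : C, 0 < q & completely_positive
    (fun X => \sum_(i < r) adj (Cs i) *m X *m Cs i
              - q *: alpha (\sum_(i < r) lam i *: Cs i) X).
Proof.
pose L : C := 1 + \sum_(i < r) (lam i)^* * lam i.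
have L0 : 0 < L.
  by rewrite ltr_wpDr // sumr_ge0 // => i _; rewrite mulrC mul_conjC_ge0.
have LL i : (lam i)^* * lam i <= L.
  rewrite /L (bigD1 i) //= addrCA lerDl addr_ge0 // sumr_ge0 // => j _.
  by rewrite mulrC mul_conjC_ge0.
have D0 : 0 < 2 ^+ r * L by rewrite mulr_gt0 // exprn_gt0 // ltr0n.
exists (2 ^+ r * L)^-1; first by rewrite invr_gt0.
move=> k X Xpsd v.
pose z i a := Cs i *m v a.
have e : \sum_a \sum_b (adj (v a) *m (\sum_(i < r) adj (Cs i) *m X a b *m Cs i
          - (2 ^+ r * L)^-1 *: alpha (\sum_(i < r) lam i *: Cs i) (X a b)) *m v b) 0 0
   = \sum_i Nq X (z i) - (2 ^+ r * L)^-1 *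
       Nq X (fun a => \sum_i lam i *: z i a).
  rewrite /Nq /Bq.
  have hA a : \sum_i lam i *: z i a = (\sum_i lam i *: Cs i) *m v a.
    by rewrite mulmx_suml; apply: eq_bigr => i _; rewrite scalemxAl.
  set A0 := \sum_i lam i *: Cs i.
  transitivity (\sum_a \sum_b (\sum_i (adj (z i a) *m X a b *m z i b) 0 0
     - (2 ^+ r * L)^-1 * (adj (A0 *m v a) *m X a b *m (A0 *m v b)) 0 0)).
    apply: eq_bigr => a _; apply: eq_bigr => b _.
    rewrite /alpha /z mulmxBr mulmxBl mxE; congr (_ + _).
      rewrite mulmx_sumr mulmx_suml summxE; apply: eq_bigr => i _.
      by rewrite !hadjM !mulmxA.
    rewrite [LHS]mxE; congr (- _).
    by rewrite -scalemxAr -scalemxAl [LHS]mxE !hadjM !mulmxA.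
  under eq_bigr do rewrite sumrB.
  rewrite sumrB; congr (_ - _).
    symmetry; rewrite exchange_big; apply: eq_bigr => a _.
    by rewrite exchange_big.
  rewrite mulr_sumr; apply: eq_bigr => a _; rewrite mulr_sumr.
  by apply: eq_bigr => b _; rewrite !hA.
rewrite e subr_ge0 ler_pdivrMl //.
apply: (le_trans (Nq_sum Xpsd (fun i a => lam i *: z i a))); rewrite -mulrA ler_wpM2l ?exprn_ge0 ?ler0n //.
rewrite mulr_sumr; apply: ler_sum => i _; rewrite NqZ.
by apply: ler_wpM2r; [exact: Nq_ge0 | exact: LL].
Qed.

End CPmain.

Section Ann.
Variable R : realType.
Local Notation C := (R[i]).
Variable m : nat.
Local Notation M := 'M[C]_m.+1.

Import VectorInternalTheory.

Lemma memvK' (v : M) (U : {vspace M}) : (v \in U) = (v2r v <= vs2mx U)%MS.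
Proof. by rewrite -genmxE. Qed.

Lemma ann_sep (S : {vspace M}) (D : M) : D \notin S ->
  exists w, (forall x, x \in S -> fw w x = 0) /\ fw w D != 0.
Proof.
rewrite memvK' submxE => nD.
have [j hj] : exists j, (v2r D *m cokermx (vs2mx S)) 0 j != 0.
  apply/existsP; apply: contraR nD => /existsPn H.
  by apply/eqP/matrixP => i j'; rewrite ord1 [RHS]mxE; move: (H j') => /negPn /eqP.
pose phi (x : M) := (v2r x *m cokermx (vs2mx S)) 0 j.
pose w : M := \matrix_(a, b) phi (delta_mx a b).
have fwE x : fw w x = phi x.
  rewrite {2}(matrix_sum_delta x) /phi linear_sum mulmx_suml summxE.
  apply: eq_bigr => a _; rewrite linear_sum mulmx_suml summxE.
  apply: eq_bigr => b _; by rewrite linearZ /= -scalemxAl [RHS]mxE mxE mulrC.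
exists w; split; last by rewrite fwE.
move=> x; rewrite memvK' submxE => /eqP hx.
by rewrite fwE /phi hx mxE.
Qed.

Lemma mem_ann (S : {vspace M}) (D : M) :
  D \in S <-> (forall w, (forall x, x \in S -> fw w x = 0) -> fw w D = 0).
Proof.
split => [DS w H | H]; first by apply: H.
apply/negPn/negP => /ann_sep [w [h1 h2]].
by rewrite (H w h1) eqxx in h2.
Qed.

Lemma vs_eq_ann (S1 S2 : {vspace M}) :
  (forall w, (forall x, x \in S1 -> fw w x = 0) <->
             (forall x, x \in S2 -> fw w x = 0)) -> S1 = S2.
Proof.
move=> H; apply/vspaceP => x; apply/idP/idP.
  by move/mem_ann => h; apply/mem_ann => w /H; apply: h.
by move/mem_ann => h; apply/mem_ann => w /H; apply: h.
Qed.

Lemma vanish_span (s : seq M) w :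
  (forall x, x \in <<s>>%VS -> fw w x = 0) <-> (forall x, x \in s -> fw w x = 0).
Proof.
split => H x; first by move=> xs; apply: H; apply: memv_span.
move=> xs; rewrite (coord_span (X := in_tuple s) xs) fw_sum big1 // => i _.
by rewrite fwZ H ?mulr0 // mem_nth.
Qed.

End Ann.

Section CPQ.
Variable R : realType.
Local Notation C := (R[i]).
Variable m : nat.
Local Notation M := 'M[C]_m.+1.

Lemma cvec_entry n (u u' : 'cV[C]_n) (Y : 'M[C]_n) :
  (adj u *m Y *m u') 0 0 = \sum_b \sum_d (u b 0)^* * Y b d * u' d 0.
Proof.
symmetry; rewrite exchange_big mxE; apply: eq_bigr => d _.
rewrite mxE mulr_suml; apply: eq_bigr => b _; by rewrite hadjE.
Qed.

Lemma cvec_delta n (u u' : 'cV[C]_n) a c :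
  (adj u *m delta_mx a c *m u') 0 0 = (u a 0)^* * u' c 0.
Proof.
rewrite -(mul_delta_mx (0 : 'I_1)) mulmxA -[_ *m _ *m u']mulmxA -colE -rowE.
by rewrite mxE big_ord1 !mxE.
Qed.

Lemma CP_Qf_ge0 (F : M -> M) : completely_positive F -> forall w, 0 <= Qf F w.
Proof.
move=> cp w.
have Hpsd : psd_block (fun a c : 'I_m.+1 => (delta_mx a c : M)).
  move=> v; under eq_bigr do under eq_bigr do rewrite cvec_delta.
  have -> : \sum_a \sum_c (v a a 0)^* * v c c 0 =
     (\sum_a v a a 0)^* * (\sum_c v c c 0).
    by rewrite conjC_sum mulr_suml; apply: eq_bigr => a _; rewrite mulr_sumr.
  by rewrite mulrC mul_conjC_ge0.
have := cp _ _ Hpsd (fun a => \col_b w a b); congr (_ <= _).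
rewrite /Qf; apply: eq_bigr => a _.
under eq_bigr do rewrite cvec_entry.
rewrite exchange_big; apply: eq_bigr => b _; apply: eq_bigr => c _.
by apply: eq_bigr => d _; rewrite !mxE; ring.
Qed.

Lemma CP_ext (F G : M -> M) :
  (forall X, F X = G X) -> completely_positive F -> completely_positive G.
Proof.
move=> FG cp k X Xp v; have := cp k X Xp v; congr (_ <= _).
by apply: eq_bigr => a _; apply: eq_bigr => b _; rewrite FG.
Qed.

End CPQ.

Section Concl.
Variable R : realType.
Local Notation C := (R[i]).
Variable m : nat.
Local Notation M := 'M[C]_m.+1.
Variables (p : nat) (A : 'I_p -> M) (b : nat -> C).
Hypothesis hb : forall n, 0 <= b n.
Variable sigma : M -> M.
Hypothesis hs : forall X, mx_cvg_to (fun N => SN A b N X) (sigma X).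
Variable V : {vspace M}.
Hypothesis hV : forall w, (forall x, x \in V -> fw w x = 0) <->
  (forall n, 0 < b n -> forall P, P \in words A n -> fw w P = 0).

Lemma Qsig_kraus r (Cs : 'I_r -> M) : is_kraus sigma Cs ->
  forall w, Qf sigma w = \sum_k (fw w (Cs k))^* * fw w (Cs k).
Proof.
move=> hk w; rewrite (Qf_ext _ (G := fun X => \sum_k adj (Cs k) *m X *m Cs k)) //.
by rewrite Qf_sum; apply: eq_bigr => k _; rewrite Qf_alpha.
Qed.

Lemma vanish_fspan r (Cs : 'I_r -> M) : is_kraus sigma Cs ->
  forall w, (forall x, x \in fspan Cs -> fw w x = 0) <-> Qf sigma w = 0.
Proof.
move=> hk w; rewrite /fspan vanish_span (Qsig_kraus hk); split => H.
  by apply: big1 => k _; rewrite H ?mulr0 // map_f // mem_enum.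
move=> x /mapP [k _ ->].
have hge : forall i : 'I_r, true -> 0 <= (fw w (Cs i))^* * fw w (Cs i).
  by move=> i _; rewrite mulrC mul_conjC_ge0.
have h1 : (fw w (Cs k))^* * fw w (Cs k) <= 0.
  rewrite -H (bigD1 k) // lerDl; apply: sumr_ge0 => i _; exact: hge.
have h2 := hge k isT.
have : (fw w (Cs k))^* * fw w (Cs k) == 0 by rewrite eq_le h1 h2.
by rewrite mulrC mul_conjC_eq0 => /eqP.
Qed.

Lemma fspan_eq r (Cs : 'I_r -> M) : is_kraus sigma Cs -> fspan Cs = V.
Proof.
move=> hk; apply: vs_eq_ann => w.
rewrite (vanish_fspan hk) (Qsig_eq0 hb hs) hV //.
Qed.

Lemma conclusion : theorem_conclusion sigma V.
Proof.
have hk := kraus_exists (sigma_lin hs) (Qsig_ge0 hb hs) (sigma_herm hb hs).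
split.
- by exists _, (Cs sigma).
- exact: fspan_eq.
- by move=> r Cs /fspan_eq ->.
move=> A0; split.
  rewrite -(fspan_eq hk) => hA.
  set r := #|{: ('I_m.+1 * 'I_m.+1)%type}| in hk *.
  set Cs0 := Cs sigma in hk *.
  have hA' : A0 \in span [tuple Cs0 k | k < r] by [].
  have eA := coord_span hA'.
  have [q q0 cp] := cp_kraus_sub Cs0 (fun i => coord [tuple Cs0 k | k < r] i A0).
  exists q; split; first exact: q0.
  apply: CP_ext cp => X.
  have eA' : \sum_(i < r) coord [tuple Cs0 k | k < r] i A0 *: Cs0 i = A0.
    by rewrite [in RHS]eA; apply: eq_bigr => i _; rewrite -tnth_nth tnth_mktuple.
  by rewrite eA' hk.
move=> [q [q0 cp]]; apply/mem_ann => w /hV /(Qsig_eq0 hb hs) Q0.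
have := CP_Qf_ge0 cp w; rewrite QfB QfZ Q0 sub0r.
rewrite (Qf_ext _ (G := fun X => adj A0 *m X *m A0)) // Qf_alpha.
rewrite oppr_ge0 pmulr_rle0 // => h.
have h2 : 0 <= (fw w A0)^* * fw w A0 by rewrite mulrC mul_conjC_ge0.
have : (fw w A0)^* * fw w A0 == 0 by rewrite eq_le h h2.
by rewrite mulrC mul_conjC_eq0 => /eqP.
Qed.

End Concl.

Section Alg.
Variable R : realType.
Local Notation C := (R[i]).
Variable m : nat.
Local Notation M := 'M[C]_m.+1.
Variables (p : nat) (A : 'I_p -> M).
Local Notation U := (<< [seq A l | l <- enum 'I_p] >>)%VS.

Lemma words_memS n P : P \in words A n.+1 <->
  exists Q l, Q \in words A n /\ P = Q * A l.
Proof.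
split.
  by move=> /allpairsPdep [Q [l [Qw _ ->]]]; exists Q, l.
move=> [Q [l [Qw ->]]]; apply/allpairsPdep; exists Q, l; split => //.
exact: mem_enum.
Qed.

Lemma AU l : A l \in U.
Proof. by apply: memv_span; rewrite map_f // mem_enum. Qed.

Lemma words_expv n P : P \in words A n -> P \in (U ^+ n)%VS.
Proof.
elim: n P => [|n IH] P.
  by rewrite inE => /eqP ->; rewrite expv0 memv_line.
move/words_memS => [Q [l [Qw ->]]]; rewrite expvSr.
by apply: memv_mul; [exact: IH | exact: AU].
Qed.

Lemma span_prod (s t : seq M) :
  (<<s>> * <<t>> <= << [seq (x * y)%R | x <- s, y <- t] >>)%VS.
Proof.
apply/prodvP => u v us vt.
rewrite (coord_span (X := in_tuple s) us) (coord_span (X := in_tuple t) vt).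
rewrite mulr_suml; apply: memv_suml => i _.
rewrite mulr_sumr; apply: memv_suml => j _.
rewrite -scalerAl -scalerAr !memvZ // memv_span //.
by apply/allpairsPdep; exists s`_i, t`_j; rewrite !mem_nth.
Qed.

Lemma expv_words n : ((U ^+ n) <= << words A n >>)%VS.
Proof.
elim: n => [|n IH].
  by rewrite expv0 /= -span_seq1 subvv.
rewrite expvSr; apply: (subv_trans (prodvS IH (subvv U))).
apply: (subv_trans (span_prod _ _)); apply/span_subvP => x.
move=> /allpairsPdep [P [B [Pw /mapP [l _ ->] ->]]].
by apply: memv_span; apply/words_memS; exists P, l.
Qed.

Lemma vanish_expv n w :
  (forall P, P \in words A n -> fw w P = 0) ->
  forall x, x \in (U ^+ n)%VS -> fw w x = 0.
Proof.
move=> H x /(subvP (expv_words n)); move: x; exact/vanish_span.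
Qed.

Lemma vanish_sum I (r : seq I) (Ps : pred I) (Vs : I -> {vspace M}) w :
  (forall i, Ps i -> forall x, x \in Vs i -> fw w x = 0) ->
  forall x, x \in (\sum_(i <- r | Ps i) Vs i)%VS -> fw w x = 0.
Proof.
move=> H; elim: r => [|y r IH] x.
  by rewrite big_nil memv0 => /eqP ->; rewrite fw0.
rewrite big_cons; case Py: (Ps y) => //; last exact: IH.
move/memv_addP => [u uV [v vV ->]].
by rewrite fwD (H y Py u uV) (IH v vV) addr0.
Qed.

Lemma gen0_vanish w : (forall x, x \in gen_alg0 U -> fw w x = 0) <->
  (forall n P, P \in words A n -> fw w P = 0).
Proof.
split => [H n P Pw | H].
  by apply: H; apply: (subvP (subX_agenv U n)); exact: words_expv.
rewrite /gen_alg0 /agenv; apply: vanish_sum => i _; apply: vanish_expv.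
exact: H.
Qed.

Lemma gen1_vanish w : (forall x, x \in gen_alg1 U -> fw w x = 0) <->
  (forall n P, (0 < n)%N -> P \in words A n -> fw w P = 0).
Proof.
split => [H [//|n] P _ Pw | H].
  apply: H; rewrite /gen_alg1.
  have -> : (\sum_(i < \dim {: M}) U ^+ i.+1 = agenv U * U)%VS.
    rewrite /agenv big_distrl /=; apply: eq_bigr => i _; exact: expvSr.
  move/words_memS: Pw => [Q [l [Qw ->]]]; apply: memv_mul; last exact: AU.
  by apply: (subvP (subX_agenv U n)); exact: words_expv.
rewrite /gen_alg1; apply: vanish_sum => i _; apply: vanish_expv.
by move=> P; apply: H.
Qed.

End Alg.

Lemma mx_cvg_ext (R : realType) p q (u v : nat -> 'M[R[i]]_(p, q)) L :
  (forall N, u N = v N) -> mx_cvg_to u L -> mx_cvg_to v L.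
Proof. by move=> uv H e /H [N HN]; exists N => n /HN; rewrite uv. Qed.

Unset Implicit Arguments.
Unset Strict Implicit.

Theorem theorem5p1 (R : realType) (m p : nat) (hp : (0 < p)%N)
  (A : 'I_p -> 'M[R[i]]_m.+1) (a : nat -> R[i])
  (sigma0 sigma1 : 'M[R[i]]_m.+1 -> 'M[R[i]]_m.+1) :
  let tau := fun X : 'M[R[i]]_m.+1 => \sum_(l < p) adj (A l) *m X *m A l in
  (forall n, 0 < a n) ->
  (* sum_n a_n tau^n converges in norm (operators represented as matrices) *)
  (exists L, mx_cvg_to
     (fun N => \sum_(n < N) a n *: lin_mx (iter n tau)) L) ->
  (forall X, mx_cvg_to (fun N => \sum_(n < N) a n *: iter n tau X) (sigma0 X)) ->
  (forall X, mx_cvg_to (fun N => \sum_(1 <= n < N) a n *: iter n tau X)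
                       (sigma1 X)) ->
  let U := (<< [seq A l | l <- enum 'I_p] >>)%VS in
  theorem_conclusion sigma0 (gen_alg0 U) /\
  theorem_conclusion sigma1 (gen_alg1 U).
Proof.
move=> tau apos _ hs0 hs1 U.
have iterE n X : iter n tau X = krausS (words A n) X by exact: iter_tau.
split.
  apply: (@conclusion R m p A a _ sigma0 _ (gen_alg0 U)).
  - by move=> n; apply: ltW.
  - move=> X; apply: mx_cvg_ext (hs0 X) => N; rewrite /SN.
    by apply: eq_bigr => n _; rewrite iterE.
  - move=> w; rewrite gen0_vanish; split => H n.
      by move=> _; apply: H.
    exact: H (apos n).
pose b1 n := if n is 0 then 0 else a n.
apply: (@conclusion R m p A b1 _ sigma1 _ (gen_alg1 U)).
- by case => [|n] /=; [exact: lexx | exact: ltW].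
- move=> X; apply: mx_cvg_ext (hs1 X) => N.
  case: N => [|N].
    rewrite big_geq //; rewrite /SN big_ord0 //.
  rewrite /SN big_ord_recl scale0r add0r big_add1 big_mkord.
  by apply: eq_bigr => n _; rewrite iterE.
- move=> w; rewrite gen1_vanish; split => H n.
    case: n => [|n] hn P Pw; first by move: hn; rewrite /b1 ltxx.
    exact: (H n.+1 P isT Pw).
  move=> P; case: n => [|n] // _ Pw; exact: (H n.+1 (apos n.+1) P Pw).
Qed.
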